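(* Let $(\mathfrak{h},\langle\cdot,\cdot\rangle)$ be a Kundt pair on $\mathfrak{e}_0(2)$. Then it is equivalent to $(\mathfrak{h}_0,\langle\cdot,\cdot\rangle_0)$ where the matrix of $\langle\cdot,\cdot\rangle_0$ in the basis $(X_1,X_2,X_3)$ is $\begin{pmatrix}0&1&0\\1&0&0\\0&0&\mu\end{pmatrix}$ with $\mu>0$, and $\mathfrak{h}_0=\mathrm{span}\{X_2,X_3\}$.
   Context: $\mathfrak{e}_0(2)$ has basis $(X_1,X_2,X_3)$ with only nonzero brackets $[X_1,X_2]=X_3$, $[X_1,X_3]=-X_2$. For a Lorentzian scalar product $\langle\cdot,\cdot\rangle$ on a Lie algebra $\mathfrak{g}$, the Levi-Civita product is defined by $2\langle u\bullet v,w\rangle=\langle[u,v],w\rangle+\langle[w,u],v\rangle+\langle[w,v],u\rangle$. A Kundt pair on $\mathfrak{g}$ is a pair consisting of a Lorentzian scalar product $\langle\cdot,\cdot\rangle$ and a codimension one subalgebra $\mathfrak{h}$ which is $\langle\cdot,\cdot\rangle$-degenerate, stable by $\bullet$, and such that $e\bullet e=0$ for all $e\in\mathfrak{h}^\perp$. Two Kundt pairs $(\mathfrak{h}_1,\langle\cdot,\cdot\rangle_1)$, $(\mathfrak{h}_2,\langle\cdot,\cdot\rangle_2)$ are equivalent if there is a Lie algebra automorphism $\phi$ of $\mathfrak{g}$ with $\phi(\mathfrak{h}_1)=\mathfrak{h}_2$ and $\phi^*\langle\cdot,\cdot\rangle_2=\langle\cdot,\cdot\rangle_1$. *)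

(* Defs.v *)
(* The Lie algebra e_0(2) is R^3 (row vectors 'rV[R]_3) with
   basis X1 = 'e_0, X2 = 'e_1, X3 = 'e_2. *)
From mathcomp Require Import all_boot all_order all_algebra.
From mathcomp Require Import reals.
Set Implicit Arguments. Unset Strict Implicit. Unset Printing Implicit Defensive.
Import Order.TTheory GRing.Theory Num.Theory.
Local Open Scope ring_scope.

Section E02.
Variable R : realType.
Notation vec := 'rV[R]_3.

Definition i0 : 'I_3 := ord0.
Definition i1 : 'I_3 := inord 1.
Definition i2 : 'I_3 := inord 2.

(* Lie bracket of e_0(2): [X1,X2] = X3, [X1,X3] = -X2, [X2,X3] = 0 *)
Definition e02_bracket (u v : vec) : vec :=
  \row_(k < 3)
    (if k == i1 then - (u 0 i0 * v 0 i2 - u 0 i2 * v 0 i0)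
     else if k == i2 then u 0 i0 * v 0 i1 - u 0 i1 * v 0 i0
     else 0).

Definition form (S : 'M[R]_3) (u v : vec) : R := (u *m S *m v^T) 0 0.

Definition lorentzian (S : 'M[R]_3) : Prop :=
  S^T = S /\
  exists P : 'M[R]_3, P \in unitmx /\
    P *m S *m P^T = diag_mx (\row_(k < 3) (if k == i0 then -1 else 1)).

(* right hand side of the Koszul formula defining the Levi-Civita product *)
Definition koszul (S : 'M[R]_3) (u v w : vec) : R :=
  form S (e02_bracket u v) w + form S (e02_bracket w u) v
  + form S (e02_bracket w v) u.

(* Levi-Civita product: the unique u.v with 2<u.v,w> = koszul u v w for all w
   (S nondegenerate). *)
Definition lc_prod (S : 'M[R]_3) (u v : vec) : vec :=
  (2%:R^-1 *: (\row_(j < 3) koszul S u v (delta_mx 0 j))) *m invmx S.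

(* subspaces of R^3 are represented by row spaces of matrices (mxalgebra) *)
Definition is_subalgebra (h : 'M[R]_3) : Prop :=
  forall u v : vec, (u <= h)%MS -> (v <= h)%MS -> (e02_bracket u v <= h)%MS.

Definition in_orth (S h : 'M[R]_3) (e : vec) : Prop :=
  forall v : vec, (v <= h)%MS -> form S e v = 0.

Definition kundt_pair (h S : 'M[R]_3) : Prop :=
  lorentzian S /\
  \rank h = 2%N /\
  is_subalgebra h /\
  (exists u : vec, [/\ (u <= h)%MS, u != 0 & in_orth S h u]) /\ (* degenerate *)
  (forall u v : vec, (u <= h)%MS -> (v <= h)%MS -> (lc_prod S u v <= h)%MS) /\
  (forall e : vec, in_orth S h e -> lc_prod S e e = 0).

Definition e02_aut (P : 'M[R]_3) : Prop :=
  P \in unitmx /\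
  forall u v : vec, e02_bracket (u *m P) (v *m P) = e02_bracket u v *m P.

(* (h1,S1) ~ (h2,S2) via phi : phi(h1) = h2 and phi^* <,>_2 = <,>_1 *)
Definition kundt_equiv (h1 S1 h2 S2 : 'M[R]_3) : Prop :=
  exists P : 'M[R]_3, [/\ e02_aut P, (h1 *m P == h2)%MS & P *m S2 *m P^T = S1].

Definition S0 (mu : R) : 'M[R]_3 :=
  \matrix_(i < 3, j < 3)
    (if ((i == i0) && (j == i1)) || ((i == i1) && (j == i0)) then 1
     else if (i == i2) && (j == i2) then mu else 0).

Definition h0 : 'M[R]_3 := delta_mx i1 i1 + delta_mx i2 i2.

End E02.

(* Main.v *)
Require Import Defs.
From mathcomp Require Import all_boot all_order all_algebra.
From mathcomp Require Import reals.
From mathcomp Require Import ring lra.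
Import Order.TTheory GRing.Theory Num.Theory.
Local Open Scope ring_scope.
Set Implicit Arguments. Unset Strict Implicit.

Section Aux.
Variable R : realType.
Notation vec := 'rV[R]_3.

Lemma fixR (a b : R) : @eq R a b -> a = b. Proof. by []. Qed.

Lemma i1E : i1 = lift ord0 ord0 :> 'I_3.
Proof. by apply/val_inj; rewrite /= inordK. Qed.
Lemma i2E : i2 = lift ord0 (lift ord0 ord0) :> 'I_3.
Proof. by apply/val_inj; rewrite /= inordK. Qed.

Lemma sum3 (F : 'I_3 -> R) : \sum_(k < 3) F k = F i0 + F i1 + F i2.
Proof. by rewrite !big_ord_recl big_ord0 i1E i2E addr0 addrA. Qed.

Lemma ord3P (k : 'I_3) : [\/ k = i0, k = i1 | k = i2].
Proof.
case: k => [[|[|[|k]]] Hk].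
- by constructor 1; apply/val_inj.
- by constructor 2; apply/val_inj; rewrite /= inordK.
- by constructor 3; apply/val_inj; rewrite /= inordK.
- by [].
Qed.

Lemma e01 : (i0 == i1) = false. Proof. by rewrite i1E. Qed.
Lemma e02 : (i0 == i2) = false. Proof. by rewrite i2E. Qed.
Lemma e10 : (i1 == i0) = false. Proof. by rewrite i1E. Qed.
Lemma e12 : (i1 == i2) = false. Proof. by rewrite i1E i2E. Qed.
Lemma e20 : (i2 == i0) = false. Proof. by rewrite i2E. Qed.
Lemma e21 : (i2 == i1) = false. Proof. by rewrite i1E i2E. Qed.
Definition eqs := (eqxx, e01, e02, e10, e12, e20, e21).

Lemma sub_h0 (w : vec) : (w <= h0 R)%MS = (w 0 i0 == 0).
Proof.
apply/idP/idP.
- case/submxP => x ->; rewrite !mxE sum3 !mxE !eqs /=.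
  by apply/eqP; ring.
- move/eqP=> w0; have -> : w = w *m h0 R; last exact: submxMl.
  apply/rowP => k; rewrite !mxE sum3 !mxE.
  by case: (ord3P k) => ->; rewrite !eqs /= ?w0; ring.
Qed.

Lemma all_sub (h : 'M[R]_3) (v w z : vec) : (v <= h)%MS -> (w <= h)%MS -> (z <= h)%MS ->
  v 0 i0 != 0 -> w 0 i0 = 0 -> z 0 i0 = 0 ->
  z 0 i1 = - (v 0 i0 * w 0 i2) -> z 0 i2 = v 0 i0 * w 0 i1 ->
  w 0 i1 ^+ 2 + w 0 i2 ^+ 2 != 0 -> (1%:M <= h)%MS.
Proof.
move=> vh wh zh c0 w0 z0 z1 z2 n0.
suff key : forall x : vec, (x <= h)%MS by apply/row_subP => j; apply: key.
move=> x.
have -> : x = (x 0 i0 / v 0 i0) *: v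
   + ((w 0 i1 * (x 0 i1 - (x 0 i0 / v 0 i0) * v 0 i1) + w 0 i2 * (x 0 i2 - (x 0 i0 / v 0 i0) * v 0 i2)) / (w 0 i1 ^+ 2 + w 0 i2 ^+ 2)) *: w
   + ((w 0 i1 * (x 0 i2 - (x 0 i0 / v 0 i0) * v 0 i2) - w 0 i2 * (x 0 i1 - (x 0 i0 / v 0 i0) * v 0 i1)) / (v 0 i0 * (w 0 i1 ^+ 2 + w 0 i2 ^+ 2))) *: z.
  apply/rowP => k; rewrite !mxE.
  case: (ord3P k) => ->; rewrite ?w0 ?z0 ?z1 ?z2; apply: fixR; field; rewrite n0 c0 //.
by apply: addmx_sub; [apply: addmx_sub|]; apply: scalemx_sub.
Qed.

Lemma sqr2_eq0 (a b : R) : a ^+ 2 + b ^+ 2 = 0 -> a = 0 /\ b = 0.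
Proof.
move/eqP; rewrite paddr_eq0 ?sqr_ge0 // !sqrf_eq0.
by case/andP => /eqP -> /eqP ->.
Qed.

Lemma h_sub (h : 'M[R]_3) : is_subalgebra h -> \rank h = 2%N -> (h <= h0 R)%MS.
Proof.
move=> sub rk; apply/row_subP => i; rewrite sub_h0; apply/negPn/negP => ci.
set v := row i h in ci.
have vh : (v <= h)%MS by apply: row_sub.
have : ~~ (h <= v)%MS.
  apply/negP => /mxrankS; rewrite rk => H.
  by have := leq_trans H (rank_leq_row v).
case/row_subPn => j rj.
set r := row j h in rj.
have rh : (r <= h)%MS by apply: row_sub.
pose w := r - (r 0 i0 / v 0 i0) *: v.
have wh : (w <= h)%MS by apply: addmx_sub => //; rewrite -scaleN1r; do 2!apply: scalemx_sub.
have w0 : w 0 i0 = 0.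
  by rewrite !mxE; apply: fixR; field; move: ci; rewrite mxE.
have n0 : w 0 i1 ^+ 2 + w 0 i2 ^+ 2 != 0.
  apply/eqP => /sqr2_eq0 [w1 w2].
  have : w = 0 by apply/rowP => k; case: (ord3P k) => ->; rewrite [RHS]mxE; [exact: w0|exact: w1|exact: w2].
  move/eqP; rewrite subr_eq0 => /eqP rE.
  by move: rj; rewrite rE scalemx_sub ?submx_refl.
clearbody w v.
pose z := e02_bracket v w.
have zh : (z <= h)%MS by apply: sub.
have := all_sub vh wh zh ci w0.
rewrite /z !mxE !eqs /= w0 !mulr0 !subr0 n0 => /(_ erefl erefl erefl erefl) /mxrankS.
by rewrite mxrank1 rk.
Qed.

Definition Pm (a b p q : R) : 'M[R]_3 := \matrix_(i < 3, j < 3)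
  (if i == i0 then (if j == i0 then 1 else if j == i1 then a else b)
   else if i == i1 then (if j == i0 then 0 else if j == i1 then p else q)
   else (if j == i0 then 0 else if j == i1 then - q else p)).

Lemma Pm_br (a b p q : R) (u v : vec) :
  e02_bracket (u *m Pm a b p q) (v *m Pm a b p q) = e02_bracket u v *m Pm a b p q.
Proof.
apply/rowP => k; rewrite !mxE !sum3 !mxE !eqs /=.
by case: (ord3P k) => ->; rewrite !eqs /=; apply: fixR; ring.
Qed.

Lemma formE (S : 'M[R]_3) (x y : vec) :
  Defs.form S x y = \sum_(j < 3) (\sum_(k < 3) x 0 k * S k j) * y 0 j.
Proof. by rewrite /Defs.form mxE; apply: eq_bigr => j _; rewrite !mxE. Qed.

Lemma lor_unit (S : 'M[R]_3) : lorentzian S -> S \in unitmx.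
Proof.
case=> _ [P [Pu PS]].
have : P *m S *m P^T \in unitmx.
  rewrite PS unitmxE det_diag !big_ord_recl big_ord0 !mxE /=.
  by rewrite mulr1 mulr1 mulN1r unitrN unitr1.
by rewrite !unitmx_mul => /andP [/andP [_ ->]].
Qed.

Lemma lor_pos (S : 'M[R]_3) : lorentzian S ->
  exists v : vec, v 0 i0 = 0 /\ 0 < Defs.form S v v.
Proof.
case=> _ [P [Pu PS]].
have key : forall w : vec, w 0 i0 = 0 -> Defs.form S (w *m P) (w *m P) = w 0 i1 ^+ 2 + w 0 i2 ^+ 2.
  move=> w w0.
  have -> : Defs.form S (w *m P) (w *m P) = Defs.form (P *m S *m P^T) w w.
    by rewrite /Defs.form trmx_mul !mulmxA.
  rewrite PS formE !sum3 !mxE !eqs /= w0; apply: fixR; ring.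
have [c|c] := eqVneq (P i1 i0 ^+ 2 + P i2 i0 ^+ 2) 0.
- have [c1 c2] := sqr2_eq0 c.
  pose w : vec := delta_mx 0 i1.
  exists (w *m P); split.
    by rewrite mxE sum3 !mxE !eqs /= c1 c2; apply: fixR; ring.
  by rewrite key ?mxE ?eqs //= expr1n expr0n addr0 ltr01.
- pose w : vec := \row_(k < 3) (if k == i1 then P i2 i0 else if k == i2 then - P i1 i0 else 0).
  exists (w *m P); split.
    by rewrite mxE sum3 !mxE !eqs /=; apply: fixR; ring.
  rewrite key ?mxE ?eqs //= sqrrN addrC lt_def c /=.
  by rewrite addr_ge0 ?sqr_ge0.
Qed.

Lemma alg (s00 s01 s02 s11 s12 s22 u1 u2 : R) :
  u1 * s11 + u2 * s12 = 0 -> u1 * s12 + u2 * s22 = 0 ->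
  u1 ^+ 2 + u2 ^+ 2 != 0 -> u1 * s01 + u2 * s02 != 0 -> 0 < s11 + s22 ->
  exists mu a b p q : R, [/\ 0 < mu, p ^+ 2 + q ^+ 2 != 0,
     2 * a + mu * b ^+ 2 = s00, p + mu * b * q = s01 &
     [/\ - q + mu * b * p = s02, mu * q ^+ 2 = s11, mu * q * p = s12 & mu * p ^+ 2 = s22]].
Proof.
move=> E1 E2 N0 D0 T0.
have T0' : s11 + s22 != 0 by rewrite gt_eqF.
have [N NE] : exists N, N = u1 ^+ 2 + u2 ^+ 2 by eexists.
have [D DE] : exists D, D = u1 * s01 + u2 * s02 by eexists.
have [T TE] : exists T, T = s11 + s22 by eexists.
rewrite -NE in N0; rewrite -DE in D0; rewrite -TE in T0 T0'.
have [mu muE] : exists mu, mu = T * N / D ^+ 2 by eexists.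
have [p pE] : exists p, p = u1 * D / N by eexists.
have [q qE] : exists q, q = - (u2 * D / N) by eexists.
have pq : p ^+ 2 + q ^+ 2 = D ^+ 2 / N by rewrite pE qE NE; field; rewrite -NE.
have pq0 : p ^+ 2 + q ^+ 2 != 0 by rewrite pq mulf_neq0 ?invr_eq0 ?sqrf_eq0.
have mu0 : mu != 0 by rewrite muE !mulf_neq0 ?invr_eq0 ?sqrf_eq0.
have pqs : p * s01 - q * s02 = D ^+ 2 / N by rewrite pE qE DE; field.
have [b bE] : exists b, b = (q * s01 + p * s02) / (mu * (p ^+ 2 + q ^+ 2)) by eexists.
have [a aE] : exists a, a = (s00 - mu * b ^+ 2) / 2 by eexists.
exists mu, a, b, p, q; split => //.
- rewrite muE !mulr_gt0 // ?invr_gt0 ?lt_def ?sqrf_eq0 ?D0 ?sqr_ge0 //.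
  by rewrite N0 NE addr_ge0 ?sqr_ge0.
- by rewrite aE; field.
- apply/eqP; rewrite -subr_eq0; apply/eqP.
  have -> : p + mu * b * q - s01
     = p * (p ^+ 2 + q ^+ 2 - (p * s01 - q * s02)) / (p ^+ 2 + q ^+ 2).
    by rewrite bE; field; rewrite pq0 mu0.
  by rewrite pqs pq subrr mulr0 mul0r.
- split; apply/eqP; rewrite -subr_eq0; apply/eqP.
  + have -> : - q + mu * b * p - s02
       = - q * (p ^+ 2 + q ^+ 2 - (p * s01 - q * s02)) / (p ^+ 2 + q ^+ 2).
      by rewrite bE; field; rewrite pq0 mu0.
    by rewrite pqs pq subrr mulr0 mul0r.
  + have -> : mu * q ^+ 2 - s11 = - (u1 * (u1 * s11 + u2 * s12) - u2 * (u1 * s12 + u2 * s22)) / N.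
      by rewrite muE qE TE NE; field; rewrite -NE N0 D0.
    by rewrite E1 E2 !mulr0 subr0 oppr0 mul0r.
  + have -> : mu * q * p - s12 = - (u1 * (u1 * s12 + u2 * s22) + u2 * (u1 * s11 + u2 * s12)) / N.
      by rewrite muE qE pE TE NE; field; rewrite -NE N0 D0.
    by rewrite E1 E2 !mulr0 addr0 oppr0 mul0r.
  + have -> : mu * p ^+ 2 - s22 = (u1 * (u1 * s11 + u2 * s12) - u2 * (u1 * s12 + u2 * s22)) / N.
      by rewrite muE pE TE NE; field; rewrite -NE N0 D0.
    by rewrite E1 E2 !mulr0 subr0 mul0r.
Qed.
End Aux.

Unset Implicit Arguments.
Set Strict Implicit.

Theorem theorem5p5 (R : realType) (h S : 'M[R]_3) :
  kundt_pair h S -> exists2 mu : R, 0 < mu & kundt_equiv h S (h0 R) (S0 mu).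
Proof.
move=> [Slor [rk [sub [[u [uh un0 uo]] _]]]].
have hh0 := h_sub sub rk.
have rh0 : \rank (h0 R) = 2%N.
  apply/eqP; rewrite eqn_leq; apply/andP; split; last by have := mxrankS hh0; rewrite rk.
  rewrite leqNgt; apply/negP => H.
  have full : row_full (h0 R) by rewrite /row_full eqn_leq rank_leq_col.
  have := submx_full (delta_mx 0 i0 : 'rV[R]_3) full.
  by rewrite sub_h0 mxE !eqxx /= oner_eq0.
have heq : (h == h0 R)%MS by rewrite -(mxrank_leqif_eq hh0).2 rk rh0.
have h0h : (h0 R <= h)%MS by case/andP: heq.
have u0 : u 0 i0 = 0 by apply/eqP; rewrite -sub_h0 (submx_trans uh hh0).
have Ss : forall i j, S i j = S j i by case: Slor => ST _ i j; rewrite -{1}ST mxE.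
have dh : forall j, j != i0 -> ((delta_mx 0 j : 'rV[R]_3) <= h)%MS.
  move=> j j0; apply: (submx_trans _ h0h); rewrite sub_h0 mxE eqxx /=.
  by rewrite [i0 == j]eq_sym (negbTE j0).
have E1 : u 0 i1 * S i1 i1 + u 0 i2 * S i1 i2 = 0.
  have := uo _ (dh i1 (negbT e10)); rewrite formE !sum3 !mxE !eqs /= u0 (Ss i2 i1) => <-.
  apply: fixR; ring.
have E2 : u 0 i1 * S i1 i2 + u 0 i2 * S i2 i2 = 0.
  have := uo _ (dh i2 (negbT e20)); rewrite formE !sum3 !mxE !eqs /= u0 => <-.
  apply: fixR; ring.
have Su := lor_unit Slor.
have N0 : u 0 i1 ^+ 2 + u 0 i2 ^+ 2 != 0.
  apply/eqP => /sqr2_eq0 [u1 u2]; move: un0; apply/negP; rewrite negbK.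
  by apply/eqP/rowP => k; case: (ord3P k) => ->; rewrite mxE.
have D0 : u 0 i1 * S i0 i1 + u 0 i2 * S i0 i2 != 0.
  apply/eqP => D0; move: un0; apply/negP; rewrite negbK; apply/eqP.
  have uS : u *m S = 0.
    apply/rowP => k; rewrite !mxE sum3 u0.
    case: (ord3P k) => -> /=.
    - by rewrite mul0r add0r (Ss i1 i0) (Ss i2 i0) D0.
    - by rewrite mul0r add0r (Ss i2 i1) E1.
    - by rewrite mul0r add0r E2.
  by rewrite -(mulmxK Su u) uS mul0mx.
have T0 : 0 < S i1 i1 + S i2 i2.
  have [v [v0 vp]] := lor_pos Slor.
  rewrite ltNge; apply/negP => Tn.
  have : (u 0 i1 ^+ 2 + u 0 i2 ^+ 2) * Defs.form S v v
       = (S i1 i1 + S i2 i2) * (v 0 i1 * u 0 i2 - v 0 i2 * u 0 i1) ^+ 2.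
    apply/eqP; rewrite -subr_eq0; apply/eqP.
    rewrite formE !sum3 v0 (Ss i2 i1).
    transitivity (v 0 i1 ^+ 2 * (u 0 i1 * (u 0 i1 * S i1 i1 + u 0 i2 * S i1 i2) - u 0 i2 * (u 0 i1 * S i1 i2 + u 0 i2 * S i2 i2))
      + 2 * v 0 i1 * v 0 i2 * (u 0 i1 * (u 0 i1 * S i1 i2 + u 0 i2 * S i2 i2) + u 0 i2 * (u 0 i1 * S i1 i1 + u 0 i2 * S i1 i2))
      + v 0 i2 ^+ 2 * (u 0 i2 * (u 0 i1 * S i1 i2 + u 0 i2 * S i2 i2) - u 0 i1 * (u 0 i1 * S i1 i1 + u 0 i2 * S i1 i2))).
      by apply: fixR; ring.
    by rewrite E1 E2; apply: fixR; ring.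
  move=> H.
  have : 0 < (u 0 i1 ^+ 2 + u 0 i2 ^+ 2) * Defs.form S v v.
    by rewrite mulr_gt0 // lt_def N0 addr_ge0 ?sqr_ge0.
  by rewrite H ltNge mulr_le0_ge0 ?sqr_ge0.
have [mu [a [b [p [q [mu0 pq0 e00 e01 [e02 e11 e12 e22]]]]]]] :=
  alg (S i0 i0) E1 E2 N0 D0 T0.
exists mu => //.
exists (Pm a b p q).
have PS : Pm a b p q *m S0 mu *m (Pm a b p q)^T = S.
  apply/matrixP => i j; rewrite !mxE sum3 !mxE !sum3 !mxE !eqs /=.
  case: (ord3P i) => ->; case: (ord3P j) => ->; rewrite !eqs /=.
  all: rewrite ?(Ss i1 i0) ?(Ss i2 i0) ?(Ss i2 i1).
  - by rewrite -e00; apply: fixR; ring.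
  - by rewrite -e01; apply: fixR; ring.
  - by rewrite -e02; apply: fixR; ring.
  - by rewrite -e01; apply: fixR; ring.
  - by rewrite -e11; apply: fixR; ring.
  - by rewrite -e12; apply: fixR; ring.
  - by rewrite -e02; apply: fixR; ring.
  - by rewrite -e12; apply: fixR; ring.
  - by rewrite -e22; apply: fixR; ring.
have Pu : Pm a b p q \in unitmx.
  by move: Su; rewrite -PS !unitmx_mul => /andP [/andP [->]].
split => //.
- by split => // x y; rewrite Pm_br.
- have hP : (h *m Pm a b p q <= h0 R)%MS.
    apply/row_subP => i; rewrite row_mul sub_h0 mxE sum3 !mxE !eqs /=.
    have := row_sub i h => /submx_trans /(_ hh0); rewrite sub_h0 mxE => /eqP ->.
    by apply/eqP; apply: fixR; ring.
  by rewrite -(mxrank_leqif_eq hP).2 mxrankMfree ?row_free_unit // rk rh0.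
Qed.
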